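(* Let $n\ge2$, let $\mathbf{p}=(p_1,\dots,p_n)$ be positive weights with $\sum p_i=1$ and let $\mathbf{x}=(x_1,\dots,x_n)$ be positive reals, not all equal. Define, for $s\in\mathbb{R}$, $$\chi_s(\mathbf p,\mathbf x)=\begin{cases}\dfrac{\sum p_i x_i^s-\left(\sum p_i x_i\right)^s}{s(s-1)}, & s\neq 0,1,\\[2mm] \log\left(\sum p_i x_i\right)-\sum p_i\log x_i, & s=0,\\[1mm] \sum p_i x_i\log x_i-\left(\sum p_ix_i\right)\log\left(\sum p_i x_i\right), & s=1.\end{cases}$$ Then $\chi_s(\mathbf p,\mathbf x)>0$ for all $s$, and the function $s\mapsto \chi_{s+1}(\mathbf p,\mathbf x)/\chi_s(\mathbf p,\mathbf x)$ is monotone increasing on $\mathbb{R}$. Equivalently, for every $s\in\mathbb{R}$ and $r>0$, $$\chi_s(\mathbf p,\mathbf x)\,\chi_{s+r+1}(\mathbf p,\mathbf x)\ge \chi_{s+1}(\mathbf p,\mathbf x)\,\chi_{s+r}(\mathbf p,\mathbf x).$$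
   Context: All sums run over $i=1,\dots,n$. *)

(* Defs.v *)
From Stdlib Require Import Reals.
Open Scope R_scope.

(* sum_{i=0}^{n-1} f i  (the paper's indices 1..n are shifted to 0..n-1) *)
Fixpoint rsum (n : nat) (f : nat -> R) : R :=
  match n with
  | O => 0
  | S m => rsum m f + f m
  end.

Definition wmean (n : nat) (p x : nat -> R) : R := rsum n (fun i => p i * x i).

Definition chi (n : nat) (p x : nat -> R) (s : R) : R :=
  if Req_EM_T s 0 then
    ln (wmean n p x) - rsum n (fun i => p i * ln (x i))
  else if Req_EM_T s 1 then
    rsum n (fun i => p i * x i * ln (x i)) - wmean n p x * ln (wmean n p x)
  else
    (rsum n (fun i => p i * Rpower (x i) s) - Rpower (wmean n p x) s)
      / (s * (s - 1)).

(* Main.v *)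
Require Import Defs.
From Stdlib Require Import Reals Lra Lia.
From Coquelicot Require Import Coquelicot.
Open Scope R_scope.

Definition f (a t : R) : R :=
  if Req_EM_T a 0 then - ln t else if Req_EM_T a 1 then t * ln t
  else exp (a * ln t) / (a * (a - 1)).
Definition df (a t : R) : R :=
  if Req_EM_T a 0 then - / t else if Req_EM_T a 1 then ln t + 1
  else exp ((a - 1) * ln t) / (a - 1).
Definition d2f (a t : R) : R := exp ((a - 2) * ln t).

Lemma exp_shift (a t : R) : 0 < t -> exp ((a - 1) * ln t) = exp (a * ln t) / t.
Proof.
  intro Ht. replace ((a - 1) * ln t) with (a * ln t + - ln t) by ring.
  rewrite exp_plus, exp_Ropp, exp_ln by exact Ht. reflexivity.
Qed.

Lemma f_der (a t : R) : 0 < t -> derivable_pt_lim (f a) t (df a t).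
Proof.
  intro Ht. apply is_derive_Reals. unfold f, df.
  destruct (Req_EM_T a 0) as [H0|H0].
  - auto_derive. lra. field. lra.
  - destruct (Req_EM_T a 1) as [H1|H1].
    + auto_derive. lra. field. lra.
    + auto_derive. lra. rewrite exp_shift by lra. field. repeat split; lra.
Qed.

Lemma df_der (a t : R) : 0 < t -> derivable_pt_lim (df a) t (d2f a t).
Proof.
  intro Ht. apply is_derive_Reals. unfold d2f, df.
  destruct (Req_EM_T a 0) as [H0|H0].
  - auto_derive. lra. subst a. replace ((0-2) * ln t) with (- ln t + - ln t) by ring.
    rewrite exp_plus, exp_Ropp, exp_ln by lra. field. lra.
  - destruct (Req_EM_T a 1) as [H1|H1].
    + auto_derive. lra. subst a. replace ((1-2) * ln t) with (- ln t) by ring.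
      rewrite exp_Ropp, exp_ln by lra. field. lra.
    + auto_derive. lra. replace (a - 2) with ((a - 1) - 1) by ring.
      rewrite (exp_shift (a - 1)) by lra. field. repeat split; lra.
Qed.

Lemma tangent (F dF d2F : R -> R) (m y : R) :
  (forall t, 0 < t -> derivable_pt_lim F t (dF t)) ->
  (forall t, 0 < t -> derivable_pt_lim dF t (d2F t)) ->
  (forall t, 0 < t -> 0 <= d2F t) -> 0 < m -> 0 < y ->
  0 <= F y - F m - dF m * (y - m) /\
  ((forall t, 0 < t -> 0 < d2F t) -> y <> m -> 0 < F y - F m - dF m * (y - m)).
Proof.
  intros HF HdF Hd2 Hm Hy.
  destruct (Rtotal_order y m) as [Hl|[He|Hg]].
  - destruct (MVT_cor2 F dF y m Hl) as [c [Ec Hc]].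
    { intros; apply HF; lra. }
    destruct (MVT_cor2 dF d2F c m (proj2 Hc)) as [e [Ee He]].
    { intros; apply HdF; lra. }
    assert (Hk : F y - F m - dF m * (y - m) = (m - y) * (d2F e * (m - c))).
    { rewrite <- Ee. lra. }
    rewrite Hk. split.
    + apply Rmult_le_pos. lra. apply Rmult_le_pos. apply Hd2; lra. lra.
    + intros Hs _. apply Rmult_lt_0_compat. lra. apply Rmult_lt_0_compat. apply Hs; lra. lra.
  - subst. split. lra. intros _ H; exfalso; apply H; reflexivity.
  - destruct (MVT_cor2 F dF m y Hg) as [c [Ec Hc]].
    { intros; apply HF; lra. }
    destruct (MVT_cor2 dF d2F m c (proj1 Hc)) as [e [Ee He]].
    { intros; apply HdF; lra. }
    assert (Hk : F y - F m - dF m * (y - m) = (y - m) * (d2F e * (c - m))).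
    { rewrite Ec. replace (dF c) with (dF m + d2F e * (c - m)) by lra. ring. }
    rewrite Hk. split.
    + apply Rmult_le_pos. lra. apply Rmult_le_pos. apply Hd2; lra. lra.
    + intros Hs _. apply Rmult_lt_0_compat. lra. apply Rmult_lt_0_compat. apply Hs; lra. lra.
Qed.

Lemma rsum_ext n f g : (forall i, (i < n)%nat -> f i = g i) -> rsum n f = rsum n g.
Proof. induction n; simpl; intros H. reflexivity. rewrite IHn, H; auto. Qed.
Lemma rsum_plus n f g : rsum n (fun i => f i + g i) = rsum n f + rsum n g.
Proof. induction n; simpl. ring. rewrite IHn; ring. Qed.
Lemma rsum_minus n f g : rsum n (fun i => f i - g i) = rsum n f - rsum n g.
Proof. induction n; simpl. ring. rewrite IHn; ring. Qed.
Lemma rsum_scal n c f : rsum n (fun i => c * f i) = c * rsum n f.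
Proof. induction n; simpl. ring. rewrite IHn; ring. Qed.
Lemma rsum_nonneg n f : (forall i, (i < n)%nat -> 0 <= f i) -> 0 <= rsum n f.
Proof. induction n; simpl; intros H. lra. assert (0 <= f n) by auto. assert (0 <= rsum n f) by auto. lra. Qed.
Lemma rsum_pos n f j : (forall i, (i < n)%nat -> 0 <= f i) -> (j < n)%nat -> 0 < f j -> 0 < rsum n f.
Proof.
  induction n; simpl; intros H Hj Hf. lia.
  destruct (Nat.eq_dec j n). subst. assert (0 <= rsum n f) by (apply rsum_nonneg; auto). lra.
  assert (0 <= f n) by auto. assert (0 < rsum n f) by (apply IHn; auto; lia). lra.
Qed.

Definition J n p x (F : R -> R) := rsum n (fun i => p i * F (x i)) - F (wmean n p x).

Lemma J_tangent n p x F dF : rsum n p = 1 ->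
  J n p x F = rsum n (fun i => p i * (F (x i) - F (wmean n p x) - dF (wmean n p x) * (x i - wmean n p x))).
Proof.
  intro Hs. unfold J. symmetry.
  rewrite (rsum_ext n _ (fun i => p i * F (x i) - (F (wmean n p x) * p i + dF (wmean n p x) * (p i * x i) - dF (wmean n p x) * wmean n p x * p i))).
  2:{ intros. ring. }
  rewrite rsum_minus, !rsum_minus, !rsum_plus, !rsum_scal, Hs. unfold wmean. ring.
Qed.

Lemma chi_J n p x a : chi n p x a = J n p x (f a).
Proof.
  unfold chi, J, f. destruct (Req_EM_T a 0).
  - rewrite (rsum_ext n (fun i => p i * - ln (x i)) (fun i => -1 * (p i * ln (x i)))) by (intros; ring).
    rewrite rsum_scal. ring.
  - destruct (Req_EM_T a 1).
    + rewrite (rsum_ext n (fun i => p i * (x i * ln (x i))) (fun i => p i * x i * ln (x i))) by (intros; ring). ring.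
    + rewrite (rsum_ext n (fun i => p i * (exp (a * ln (x i)) / (a * (a - 1)))) (fun i => / (a * (a-1)) * (p i * Rpower (x i) a))) by (intros; unfold Rpower; unfold Rdiv; ring).
      rewrite rsum_scal. unfold Rpower, Rdiv. ring.
Qed.

Lemma J_comb n p x A B C D c1 c2 c3 :
  J n p x (fun t => f A t - c1 * f B t - c2 * f C t + c3 * f D t) =
  J n p x (f A) - c1 * J n p x (f B) - c2 * J n p x (f C) + c3 * J n p x (f D).
Proof.
  unfold J.
  rewrite (rsum_ext n _ (fun i => p i * f A (x i) - c1 * (p i * f B (x i)) - c2 * (p i * f C (x i)) + c3 * (p i * f D (x i)))) by (intros; ring).
  rewrite rsum_plus, !rsum_minus, !rsum_scal. ring.
Qed.

Lemma der_comb F1 F2 F3 F4 d1 d2 d3 d4 t c1 c2 c3 :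
  derivable_pt_lim F1 t d1 -> derivable_pt_lim F2 t d2 ->
  derivable_pt_lim F3 t d3 -> derivable_pt_lim F4 t d4 ->
  derivable_pt_lim (fun t => F1 t - c1 * F2 t - c2 * F3 t + c3 * F4 t) t
    (d1 - c1 * d2 - c2 * d3 + c3 * d4).
Proof.
  intros H1 H2 H3 H4.
  exact (derivable_pt_lim_plus _ _ _ _ _
    (derivable_pt_lim_minus _ _ _ _ _
      (derivable_pt_lim_minus _ _ _ _ _ H1 (derivable_pt_lim_scal _ c1 _ _ H2))
      (derivable_pt_lim_scal _ c2 _ _ H3))
    (derivable_pt_lim_scal _ c3 _ _ H4)).
Qed.

Lemma d2_comb s r c t : 0 < r -> 0 < c -> 0 < t ->
  0 <= d2f (s + r + 1) t - c * d2f (s + r) t - exp (r * ln c) * d2f (s + 1) t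
        + c * exp (r * ln c) * d2f s t.
Proof.
  intros Hr Hc Ht. unfold d2f.
  replace ((s + r + 1 - 2) * ln t) with ((s - 2) * ln t + r * ln t + ln t) by ring.
  replace ((s + r - 2) * ln t) with ((s - 2) * ln t + r * ln t) by ring.
  replace ((s + 1 - 2) * ln t) with ((s - 2) * ln t + ln t) by ring.
  rewrite !exp_plus, exp_ln by exact Ht.
  set (E := exp ((s - 2) * ln t)). assert (0 < E) by apply exp_pos.
  replace (E * exp (r * ln t) * t - c * (E * exp (r * ln t)) - exp (r * ln c) * (E * t) +
     c * exp (r * ln c) * E) with (E * ((t - c) * (exp (r * ln t) - exp (r * ln c)))) by ring.
  apply Rmult_le_pos. lra.
  destruct (Rtotal_order t c) as [Hl|[He|Hg]].
  - assert (exp (r * ln t) < exp (r * ln c)).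
    { apply exp_increasing. apply Rmult_lt_compat_l. exact Hr. apply ln_increasing; lra. }
    nra.
  - subst. lra.
  - assert (exp (r * ln c) < exp (r * ln t)).
    { apply exp_increasing. apply Rmult_lt_compat_l. exact Hr. apply ln_increasing; lra. }
    nra.
Qed.

Theorem mainTheorem6 (n : nat) (p x : nat -> R)
  (hn : (2 <= n)%nat)
  (hp : forall i, (i < n)%nat -> 0 < p i)
  (hsum : rsum n p = 1)
  (hx : forall i, (i < n)%nat -> 0 < x i)
  (hne : exists i j, (i < n)%nat /\ (j < n)%nat /\ x i <> x j) :
  (forall s : R, 0 < chi n p x s) /\
  (forall s t : R, s <= t ->
     chi n p x (s + 1) / chi n p x s <= chi n p x (t + 1) / chi n p x t) /\
  (forall s r : R, 0 < r ->
     chi n p x s * chi n p x (s + r + 1) >= chi n p x (s + 1) * chi n p x (s + r)).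
Proof.
  set (m := wmean n p x).
  assert (Hm : 0 < m).
  { destruct hne as [i [j [Hi _]]]. unfold m, wmean.
    apply (rsum_pos n _ i). intros k Hk. apply Rmult_le_pos; apply Rlt_le; auto.
    exact Hi. apply Rmult_lt_0_compat; auto. }
  assert (Hj : exists j, (j < n)%nat /\ x j <> m).
  { destruct hne as [i [j [Hi [Hj' Hij]]]].
    destruct (Req_EM_T (x i) m). exists j. split; auto. intro; apply Hij; congruence.
    exists i; auto. }
  assert (P1 : forall s, 0 < chi n p x s).
  { intro s. rewrite chi_J, (J_tangent n p x (f s) (df s) hsum). fold m.
    destruct Hj as [j [Hjn Hjm]].
    apply (rsum_pos n _ j).
    - intros i Hi. apply Rmult_le_pos. apply Rlt_le; auto.
      refine (proj1 (tangent (f s) (df s) (d2f s) m (x i) _ _ _ _ _)); auto using f_der, df_der.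
      intros; apply Rlt_le, exp_pos.
    - exact Hjn.
    - apply Rmult_lt_0_compat. auto.
      refine (proj2 (tangent (f s) (df s) (d2f s) m (x j) _ _ _ _ _) _ Hjm); auto using f_der, df_der.
      intros; apply Rlt_le, exp_pos. intros; apply exp_pos. }
  assert (P3 : forall s r, 0 < r ->
     chi n p x s * chi n p x (s + r + 1) >= chi n p x (s + 1) * chi n p x (s + r)).
  { intros s r Hr.
    set (c := chi n p x (s + 1) / chi n p x s).
    assert (Hs := P1 s). assert (Hs1 := P1 (s + 1)).
    assert (Hc : 0 < c) by (unfold c; apply Rdiv_lt_0_compat; auto).
    set (cr := exp (r * ln c)).
    assert (K : 0 <= J n p x (fun t => f (s + r + 1) t - c * f (s + r) t - cr * f (s + 1) t
                                   + (c * cr) * f s t)).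
    { rewrite (J_tangent n p x _ (fun t => df (s + r + 1) t - c * df (s + r) t
                  - cr * df (s + 1) t + (c * cr) * df s t) hsum). fold m.
      apply rsum_nonneg. intros i Hi. apply Rmult_le_pos. apply Rlt_le; auto.
      refine (proj1 (tangent (fun t => f (s + r + 1) t - c * f (s + r) t - cr * f (s + 1) t
                                   + (c * cr) * f s t) (fun t => df (s + r + 1) t - c * df (s + r) t
                  - cr * df (s + 1) t + (c * cr) * df s t) (fun t => d2f (s + r + 1) t - c * d2f (s + r) t
                  - cr * d2f (s + 1) t + (c * cr) * d2f s t) m (x i) _ _ _ _ _)); auto.
      - intros; apply der_comb; apply f_der; auto.
      - intros; apply der_comb; apply df_der; auto.
      - intros; apply d2_comb; auto. }
    rewrite J_comb, <- !chi_J in K.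
    assert (Ec : chi n p x (s + 1) = c * chi n p x s) by (unfold c; field; lra).
    rewrite Ec in K |- *.
    assert (chi n p x (s + r + 1) >= c * chi n p x (s + r)) by nra.
    nra. }
  split; [exact P1|split; [|exact P3]].
  intros s t Hst. destruct (Req_dec s t) as [E|E]. subst; lra.
  assert (H := P3 s (t - s) ltac:(lra)).
  replace (s + (t - s) + 1) with (t + 1) in H by ring.
  replace (s + (t - s)) with t in H by ring.
  assert (A := P1 s). assert (B := P1 t).
  unfold Rdiv. apply (Rmult_le_reg_r (chi n p x s * chi n p x t)). nra.
  replace (chi n p x (s + 1) * / chi n p x s * (chi n p x s * chi n p x t))
    with (chi n p x (s + 1) * chi n p x t) by (field; lra).
  replace (chi n p x (t + 1) * / chi n p x t * (chi n p x s * chi n p x t))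
    with (chi n p x s * chi n p x (t + 1)) by (field; lra).
  lra.
Qed.
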